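(* Let $k\ge4$ be even and let $G=(V,E)$ be a $k$-uniform cored hypergraph with Laplacian tensor $\mathcal L$ and signless Laplacian tensor $\mathcal Q$. For every $e\in E$ let $i_e\in e$ be a cored vertex. Then: (i) If $\mathbf x\in\mathbb R^n_+$ is an H-eigenvector of $\mathcal Q$ corresponding to $\lambda(\mathcal Q)$, then the vector $\mathbf y\in\mathbb R^n$ with $y_{i_e}=-x_{i_e}$ for all $e\in E$ and $y_j=x_j$ for all other $j$ is an H-eigenvector of $\mathcal L$ corresponding to $\lambda(\mathcal L)$. (ii) If $\mathbf x\in\mathbb R^n$ is an H-eigenvector of $\mathcal L$ corresponding to $\lambda(\mathcal L)$, then the vector $\mathbf y\in\mathbb R^n_+$ with $y_i=|x_i|$ for all $i\in[n]$ is an H-eigenvector of $\mathcal Q$ corresponding to $\lambda(\mathcal Q)$.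
   Context: A $k$-uniform hypergraph $G=(V,E)$ has $V=[n]$ and a nonempty set $E$ of $k$-element subsets of $V$; $d_i$ is the number of edges containing $i$. A cored vertex is a vertex of degree one; $G$ is cored if every edge contains a cored vertex. With $\mathcal D$ the diagonal tensor with entries $d_i$ and $\mathcal A$ the order-$k$ tensor with entries $\frac1{(k-1)!}$ at index tuples forming an edge and $0$ otherwise, $\mathcal L=\mathcal D-\mathcal A$ and $\mathcal Q=\mathcal D+\mathcal A$; thus $(\mathcal L\mathbf x^{k-1})_i=d_ix_i^{k-1}-\sum_{e\ni i}\prod_{s\in e\setminus\{i\}}x_s$ and $(\mathcal Q\mathbf x^{k-1})_i=d_ix_i^{k-1}+\sum_{e\ni i}\prod_{s\in e\setminus\{i\}}x_s$. A real $\lambda$ is an H-eigenvalue of $\mathcal T$ with H-eigenvector $\mathbf x\neq0$ if $(\mathcal T\mathbf x^{k-1})_i=\lambda x_i^{k-1}$ for all $i$; $\lambda(\mathcal T)$ is the largest H-eigenvalue. $\mathbb R^n_+$ is the nonnegative orthant. *)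

(* Defs.v *)
From mathcomp Require Import all_boot all_order all_algebra.
From mathcomp Require Import reals.
Set Implicit Arguments. Unset Strict Implicit. Unset Printing Implicit Defensive.
Import Order.TTheory GRing.Theory Num.Theory.
Local Open Scope ring_scope.

Definition uniform_hypergraph (n k : nat) (E : {set {set 'I_n}}) : Prop :=
  E != set0 /\ forall e, e \in E -> #|e| = k.

Definition deg (n : nat) (E : {set {set 'I_n}}) (i : 'I_n) : nat :=
  #|[set e in E | i \in e]|.

Definition cored_vertex (n : nat) (E : {set {set 'I_n}}) (i : 'I_n) : Prop :=
  deg E i = 1%N.

Definition cored (n : nat) (E : {set {set 'I_n}}) : Prop :=
  forall e, e \in E -> exists2 i, i \in e & cored_vertex E i.

(* (L x^{k-1})_i and (Q x^{k-1})_i *)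
Definition Lx (R : realType) (n k : nat) (E : {set {set 'I_n}})
    (x : 'I_n -> R) (i : 'I_n) : R :=
  (deg E i)%:R * x i ^+ k.-1
  - \sum_(e in E | i \in e) \prod_(s in e :\ i) x s.

Definition Qx (R : realType) (n k : nat) (E : {set {set 'I_n}})
    (x : 'I_n -> R) (i : 'I_n) : R :=
  (deg E i)%:R * x i ^+ k.-1
  + \sum_(e in E | i \in e) \prod_(s in e :\ i) x s.

(* H-eigenpairs of a tensor given by its action T : (I_n -> R) -> I_n -> R *)
Definition H_eigvec (R : realType) (n k : nat)
    (T : ('I_n -> R) -> 'I_n -> R) (lam : R) (x : 'I_n -> R) : Prop :=
  (exists i, x i != 0) /\ forall i, T x i = lam * x i ^+ k.-1.

Definition H_eigval (R : realType) (n k : nat)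
    (T : ('I_n -> R) -> 'I_n -> R) (lam : R) : Prop :=
  exists x, H_eigvec k T lam x.

Definition largest_H_eigval (R : realType) (n k : nat)
    (T : ('I_n -> R) -> 'I_n -> R) (lam : R) : Prop :=
  H_eigval k T lam /\ forall mu, H_eigval k T mu -> mu <= lam.

Definition nonneg_vec (R : realType) (n : nat) (x : 'I_n -> R) : Prop :=
  forall i, 0 <= x i.

(* Main.v *)
Require Import Defs.
From mathcomp Require Import all_boot all_order all_algebra.
From mathcomp Require Import boolp classical_sets reals topology normedtype derive realfun.
From mathcomp Require Import ring.
Import Order.TTheory GRing.Theory Num.Theory.
Set Implicit Arguments. Unset Strict Implicit. Unset Printing Implicit Defensive.
Local Open Scope ring_scope.
Import numFieldNormedType.Exports.
Local Open Scope ring_scope.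

Lemma cont_sum (T : topologicalType) (R : realType) (I : Type) (r : seq I) (P : pred I)
  (F : I -> T -> R) : (forall i, continuous (F i)) ->
  continuous (fun x => \sum_(i <- r | P i) F i x).
Proof. move=> h; apply: (continuous_big (op := +%R)); [exact: add_continuous | move=> i _; exact: h]. Qed.

Lemma cont_prod (T : topologicalType) (R : realType) (I : Type) (r : seq I) (P : pred I)
  (F : I -> T -> R) : (forall i, continuous (F i)) ->
  continuous (fun x => \prod_(i <- r | P i) F i x).
Proof. move=> h; apply: (@continuous_big R I (@GRing.mul R) 1 P mul_continuous T r F) => i _; exact: h. Qed.

Lemma cont_mul (T : topologicalType) (R : realType) (f g : T -> R) :
  continuous f -> continuous g -> continuous (fun x => f x * g x).
Proof. by move=> hf hg x; apply: cvgM; [exact: hf | exact: hg]. Qed.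

Lemma cont_add (T : topologicalType) (R : realType) (f g : T -> R) :
  continuous f -> continuous g -> continuous (fun x => f x + g x).
Proof. by move=> hf hg x; apply: cvgD; [exact: hf | exact: hg]. Qed.

Lemma cont_opp (T : topologicalType) (R : realType) (f : T -> R) :
  continuous f -> continuous (fun x => - f x).
Proof. by move=> hf x; apply: cvgN; exact: hf. Qed.

Lemma cont_cst (T : topologicalType) (R : realType) (c : R) :
  continuous (fun x : T => c).
Proof. by move=> x; exact: cvg_cst. Qed.

Lemma cont_coordX (R : realType) n (i : 'I_n) m :
  continuous (fun v : 'rV[R]_n => v ord0 i ^+ m).
Proof.
move=> v; exact: (@continuous_comp _ _ _ (fun v : 'rV[R]_n => v ord0 i) (fun x : R => x ^+ m) v (@coord_continuous R 1 n ord0 i v) (@exprn_continuous R m _)).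
Qed.

Lemma cont_coord (R : realType) n (i : 'I_n) :
  continuous (fun v : 'rV[R]_n => v ord0 i).
Proof. exact: coord_continuous. Qed.
Definition Nf (R : realType) (n k : nat) (x : 'I_n -> R) : R := \sum_i x i ^+ k.
Definition Ff (R : realType) (n k : nat) (E : {set {set 'I_n}}) (x : 'I_n -> R) : R :=
  \sum_i x i * Qx k E x i.

Lemma prod_split (R : realType) (n : nat) (e : {set 'I_n}) (x : 'I_n -> R) i :
  i \in e -> \prod_(s in e) x s = x i * \prod_(s in e :\ i) x s.
Proof.
move=> ie; rewrite (bigD1 i) //=; congr (_ * _).
by apply: eq_bigl => s; rewrite !inE andbC.
Qed.

Lemma Fid (R : realType) (n k : nat) (E : {set {set 'I_n}}) (x : 'I_n -> R) :
  (0 < k)%N -> uniform_hypergraph k E ->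
  Ff k E x = \sum_i (deg E i)%:R * x i ^+ k
             + k%:R * \sum_(e in E) \prod_(s in e) x s.
Proof.
move=> k0 [_ hu]; rewrite /Ff /Qx.
under eq_bigr => i _ do rewrite mulrDr mulrCA -exprS (prednK k0) big_distrr /=.
rewrite big_split /=; congr (_ + _).
have -> : \sum_i \sum_(e in E | i \in e) x i * \prod_(s in e :\ i) x s
   = \sum_i \sum_(e in E) (i \in e)%:R * \prod_(s in e) x s.
  apply: eq_bigr => i _; rewrite big_mkcondr /=; apply: eq_bigr => e _.
  by case: ifP => ie; rewrite ?mul1r ?mul0r // (prod_split _ ie).
rewrite exchange_big big_distrr /=; apply: eq_big => // e eE.
rewrite -big_distrl /= -(hu e eE); congr (_ * _).
rewrite -sum1_card natr_sum [RHS]big_mkcond /=; apply: eq_bigr => i _; by case: (i \in e).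
Qed.
Lemma fermat_poly (R : realType) (a b s0 : R) (k : nat) :
  (forall s, a * s ^+ k + b * s <= a * s0 ^+ k + b * s0) ->
  k%:R * a * s0 ^+ k.-1 + b = 0.
Proof.
move=> H.
pose p : {poly R} := a *: 'X^k + b *: 'X.
have hp s : p.[s] = a * s ^+ k + b * s by rewrite /p !hornerE.
have D := @derive1_at_max R (horner p) (s0 - 1) (s0 + 1) s0.
have /D : s0 - 1 <= s0 + 1 by rewrite lerD2l; apply: (le_trans (lerN10 _)).
move=> /(_ (fun t _ => @derivable_horner _ p t)).
have -> : s0 \in `](s0 - 1), (s0 + 1)[ by rewrite in_itv /= ltrDl ltrBlDr ltrDl ltr01.
move=> /(_ isT (fun t _ => _)).
rewrite !hp. move=> /(_ (fun t => ltac:(rewrite hp; exact: H))) Hd.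
have Hd2 := is_derive_poly p s0.
have E1 : (p^`()).[s0] = 0.
  by rewrite -(@derive_val _ _ _ _ _ _ _ Hd2) (@derive_val _ _ _ _ _ _ _ Hd).
move: E1.
rewrite /p derivD !derivZ derivXn derivX !hornerE hornerMn hornerXn -mulr_natl mulrCA mulrA. by []. Qed.


Lemma lagrange (R : realType) (n k : nat) (E : {set {set 'I_n}}) (mu : R) (w : 'I_n -> R) :
  (0 < k)%N -> uniform_hypergraph k E ->
  (forall u, Ff k E u <= mu * Nf k u) -> Ff k E w = mu * Nf k w ->
  forall j, Qx k E w j = mu * w j ^+ k.-1.
Proof.
move=> k0 hu Hle Heq j.
pose u (s : R) := fun i => if i == j then s else w i.
have uw : u (w j) = w by apply/funext => i; rewrite /u; case: eqP => // ->.
pose Sj := \sum_(e in E | j \in e) \prod_(s0 in e :\ j) w s0.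
pose A := \sum_(i | i != j) (deg E i)%:R * w i ^+ k.
pose T := \sum_(e in E | j \notin e) \prod_(s0 in e) w s0.
pose B := \sum_(i | i != j) w i ^+ k.
have HF s : Ff k E (u s) = (deg E j)%:R * s ^+ k + A + k%:R * (s * Sj + T).
  rewrite (Fid _ k0 hu) (bigD1 j) //= {1}/u eqxx; congr (_ + _ + _).
    by apply: eq_bigr => i /negbTE nij; rewrite /u nij.
  congr (_ * _). rewrite [LHS](bigID (fun e : {set _} => j \in e)) /=; congr (_ + _).
    rewrite big_distrr /=; apply: eq_bigr => e /andP [eE je].
    rewrite (prod_split _ je) {1}/u eqxx; congr (_ * _).
    by apply: eq_bigr => i; rewrite !inE => /andP [/negbTE nij _]; rewrite /u nij.
  apply: eq_bigr => e /andP [eE je]; apply: eq_bigr => i ie.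
  rewrite /u; case: eqP => // ij; by rewrite -ij ie in je.
have HN s : Nf k (u s) = s ^+ k + B.
  rewrite /Nf (bigD1 j) //= {1}/u eqxx; congr (_ + _).
  by apply: eq_bigr => i /negbTE nij; rewrite /u nij.
have key s : ((deg E j)%:R - mu) * s ^+ k + (k%:R * Sj) * s <=
             ((deg E j)%:R - mu) * w j ^+ k + (k%:R * Sj) * w j.
  have h1 := Hle (u s); have h2 := Heq; rewrite -uw in h2.
  rewrite HF HN in h1; rewrite HF HN in h2.
  rewrite -subr_ge0; rewrite -subr_ge0 in h1.
  have -> : ((deg E j)%:R - mu) * w j ^+ k + k%:R * Sj * w j -
     (((deg E j)%:R - mu) * s ^+ k + k%:R * Sj * s) =
     mu * (s ^+ k + B) - ((deg E j)%:R * s ^+ k + A + k%:R * (s * Sj + T)) -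
     (mu * (w j ^+ k + B) - ((deg E j)%:R * w j ^+ k + A + k%:R * (w j * Sj + T))).
    by ring.
  by rewrite h2 subrr subr0.
have := fermat_poly key.
have kn0 : (k%:R : R) != 0 by rewrite pnatr_eq0 -lt0n.
rewrite /Qx -/Sj => /eqP; rewrite -mulrA -mulrDr mulf_eq0 (negbTE kn0) /=.
rewrite mulrBl addrAC subr_eq0 => /eqP ->; by [].
Qed.
Definition fl (R : realType) (n : nat) (E : {set {set 'I_n}}) (ie : {set 'I_n} -> 'I_n)
  (z : 'I_n -> R) : 'I_n -> R :=
  fun j => if [exists e in E, ie e == j] then - z j else z j.

Lemma flipped_iff (n : nat) (E : {set {set 'I_n}}) (ie : {set 'I_n} -> 'I_n) e s :
  (forall e, e \in E -> ie e \in e /\ cored_vertex E (ie e)) ->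
  e \in E -> s \in e -> [exists f in E, ie f == s] = (s == ie e).
Proof.
move=> Hie eE se; apply/idP/idP; last first.
  by move=> /eqP ->; apply/existsP; exists e; rewrite eE eqxx.
case/existsP=> f /andP [fE /eqP fs].
have [sf cf] := Hie f fE; rewrite fs in sf.
move: cf; rewrite /cored_vertex /deg fs => /eqP /cards1P [a Ha].
have ea : e \in [set a] by rewrite -Ha inE eE se.
have fa : f \in [set a] by rewrite -Ha inE fE sf.
by move: ea fa; rewrite !inE => /eqP -> /eqP <-; rewrite fs.
Qed.

Lemma prod_fl (R : realType) (n : nat) (E : {set {set 'I_n}}) (ie : {set 'I_n} -> 'I_n)
   (z : 'I_n -> R) e i :
  (forall e, e \in E -> ie e \in e /\ cored_vertex E (ie e)) ->
  e \in E -> i \in e ->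
  \prod_(s in e :\ i) fl E ie z s =
    if i == ie e then \prod_(s in e :\ i) z s else - \prod_(s in e :\ i) z s.
Proof.
move=> Hie eE ie_.
have nf s : s \in e -> s != ie e -> fl E ie z s = z s.
  by move=> se sne; rewrite /fl (flipped_iff Hie eE se) (negbTE sne).
case: ifP => [/eqP -> | /negbT ine].
  apply: eq_bigr => s; rewrite !inE => /andP [sne se]; exact: nf.
have iee : ie e \in e :\ i by rewrite !inE eq_sym ine (proj1 (Hie e eE)).
rewrite (bigD1 _ iee) [in RHS](bigD1 _ iee) /= -mulNr; congr (_ * _).
  by rewrite /fl (flipped_iff Hie eE (proj1 (Hie e eE))) eqxx.
apply: eq_bigr => s /andP [+ sne] => H; apply: nf sne; have : s \in e :\ i by []. by case/setD1P.
Qed.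

Lemma Lx_fl (R : realType) (n k : nat) (E : {set {set 'I_n}}) (ie : {set 'I_n} -> 'I_n)
   (z : 'I_n -> R) i :
  (forall e, e \in E -> ie e \in e /\ cored_vertex E (ie e)) ->
  (0 < k)%N -> ~~ odd k ->
  Lx k E (fl E ie z) i =
    (if [exists e in E, ie e == i] then -1 else 1) * Qx k E z i
  /\ fl E ie z i ^+ k.-1 =
    (if [exists e in E, ie e == i] then -1 else 1) * z i ^+ k.-1.
Proof.
move=> Hie k0 ev.
have ok : odd k.-1 by move: k0 ev; case: k => // k _ /= /negbNE.
rewrite /Lx /Qx [fl E ie z i]/fl; case: ifP => fi.
- rewrite exprNn -signr_odd ok expr1 !mulN1r; split => //.
  rewrite opprD mulrN; congr (_ - _).
  apply: eq_bigr => e /andP [eE iE]; rewrite (prod_fl _ Hie eE iE).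
  by rewrite -(flipped_iff Hie eE iE) fi.
- rewrite !mul1r; split => //; rewrite -(opprK (\sum_(e in E | i \in e) \prod_(s in e :\ i) z s)) -sumrN; congr (_ + _); rewrite opprK.
  apply: eq_bigr => e /andP [eE iE]; rewrite (prod_fl _ Hie eE iE).
  by rewrite -(flipped_iff Hie eE iE) fi opprK.
Qed.

Lemma Nf_ge0 (R : realType) n k (u : 'I_n -> R) : ~~ odd k -> 0 <= Nf k u.
Proof. by move=> ev; apply: sumr_ge0 => i _; rewrite exprn_even_ge0. Qed.

Lemma Nf_term (R : realType) n k (u : 'I_n -> R) j : ~~ odd k -> u j ^+ k <= Nf k u.
Proof.
move=> ev; rewrite /Nf (bigD1 j) //= lerDl; apply: sumr_ge0 => i _.
by rewrite exprn_even_ge0.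
Qed.

Lemma Qx_hom (R : realType) n k (E : {set {set 'I_n}}) (u : 'I_n -> R) c i :
  uniform_hypergraph k E ->
  Qx k E (fun s => c * u s) i = c ^+ k.-1 * Qx k E u i.
Proof.
move=> [_ hu]; rewrite /Qx mulrDr exprMn mulrCA; congr (_ + _).
rewrite big_distrr /=; apply: eq_bigr => e /andP [eE iE].
rewrite big_split /= prodr_const; congr (_ * _); congr (_ ^+ _).
by have := cardsD1 i e; rewrite iE hu // add1n => ->.
Qed.

Lemma Ff_hom (R : realType) n k (E : {set {set 'I_n}}) (u : 'I_n -> R) c :
  (0 < k)%N -> uniform_hypergraph k E ->
  Ff k E (fun s => c * u s) = c ^+ k * Ff k E u.
Proof.
move=> k0 hu; rewrite /Ff big_distrr /=; apply: eq_bigr => i _.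
have -> : c ^+ k = c * c ^+ k.-1 by rewrite -exprS prednK.
by rewrite Qx_hom //; ring.
Qed.

Lemma Nf_hom (R : realType) n k (u : 'I_n -> R) c :
  Nf k (fun s => c * u s) = c ^+ k * Nf k u.
Proof. by rewrite /Nf big_distrr /=; apply: eq_bigr => i _; rewrite exprMn. Qed.

Local Open Scope classical_set_scope.

Lemma Ff_bound (R : realType) n k (E : {set {set 'I_n}}) (i0 : 'I_n) :
  (0 < k)%N -> ~~ odd k -> uniform_hypergraph k E ->
  exists mu : R, H_eigval k (Qx k E) mu /\ forall u, Ff k E u <= mu * Nf k u.
Proof.
move=> k0 ev hu.
pose xv (v : 'rV[R]_n) := fun i => v ord0 i.
have cN : continuous (fun v => Nf k (xv v)).
  by apply: cont_sum => i; exact: cont_coordX.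
have cF : continuous (fun v => Ff k E (xv v)).
  apply: cont_sum => i; apply: cont_mul; first exact: cont_coord.
  apply: cont_add; first by apply: cont_mul; [exact: cont_cst | exact: cont_coordX].
  apply: cont_sum => e; apply: cont_prod => s; exact: cont_coord.
pose A := [set v : 'rV[R]_n | forall i, `[-1, 1]%classic (v ord0 i)] `&`
          [set v | 1 <= Nf k (xv v)].
have cA : compact A.
  apply: compact_closedI.
    exact: (@rV_compact R n (fun _ => `[-1, 1]%classic) (fun _ => @segment_compact R _ _)).
  apply: (preimage_closed (f := fun v => Nf k (xv v)) (D := [set x | 1 <= x])).
    by move=> v _; exact: cN.
  exact: closed_ge.
have A0 : A !=set0.
  exists (const_mx 1); split => [i|] /=.
    rewrite mxE in_itv /= lexx andbT; exact: (le_trans (lerN10 _) ler01).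
  rewrite /xv /Nf; under eq_bigr do rewrite mxE expr1n.
  by rewrite sumr_const card_ord ler1n; by case: (n) i0 => [[]|].
pose G v := Ff k E (xv v) / Nf k (xv v).
have cG : {within A, continuous G}.
  apply: continuous_in_subspaceT => v; rewrite inE => -[_ Av].
  apply: (cvgM (cF v)).
  apply: (cvgV _ (cN v)).
  by rewrite gt_eqF // (lt_le_trans ltr01).
have [c Ac cmax] := EVT_max_rV A0 cA cG.
pose mu := G c.
have bound : forall u, Ff k E u <= mu * Nf k u.
  move=> u.
  case: (pselect (exists j, u j != 0)) => [[j uj]|nz]; last first.
    have u0 : forall i, u i = 0.
      by move=> i; apply/eqP; apply/negPn/negP => h; apply: nz; exists i.
    have -> : Ff k E u = 0 by rewrite /Ff big1 // => i _; rewrite u0 mul0r.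
    have -> : Nf k u = 0 by rewrite /Nf big1 // => i _; rewrite u0 expr0n gtn_eqF.
    by rewrite mulr0.
  case: (@arg_maxP _ _ _ j xpredT (fun i => `|u i|) isT) => i1 _ Hm.
  set m := `|u i1| in Hm.
  have m0 : 0 < m by rewrite (lt_le_trans _ (Hm j isT)) // normr_gt0.
  pose v := \row_i (m^-1 * u i).
  have xvv : xv v = fun i => m^-1 * u i by apply/funext => i; rewrite /xv mxE.
  have Av : A v.
    split => [i|] /=.
      rewrite mxE in_itv /= -ler_norml normrM normfV (ger0_norm (ltW m0)).
      by rewrite mulrC ler_pdivrMr // mul1r; exact: Hm.
    rewrite xvv; apply: le_trans (Nf_term _ i1 ev).
    rewrite exprMn -[u i1 ^+ k]ger0_norm ?exprn_even_ge0 // normrX -/m.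
    by rewrite exprVn mulVf // expf_neq0 // gt_eqF.
  have := cmax v (mem_set Av); rewrite /G -/mu xvv Ff_hom // Nf_hom // => hle.
  have Npos : 0 < Nf k u by apply: lt_le_trans (Nf_term _ j ev); rewrite exprn_even_gt0 // uj orbT.
  have mk0 : m^-1 ^+ k != 0 by rewrite expf_neq0 // invr_eq0 gt_eqF.
  move: hle; rewrite invfM mulrACA mulfV // mul1r ler_pdivrMr //.
exists mu; split; last exact: bound.
have Nc : 1 <= Nf k (xv c) by move: Ac; rewrite inE => -[].
exists (xv c); split.
  case: (pselect (exists i, xv c i != 0)) => // nz.
  have : Nf k (xv c) = 0.
    rewrite /Nf big1 // => i _.
    have -> : xv c i = 0 by apply/eqP; apply/negPn/negP => h; apply: nz; exists i.
    by rewrite expr0n gtn_eqF.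
  by move=> h; move: Nc; rewrite h ler10.
apply: lagrange => //.
rewrite /mu /G -mulrA mulVf ?mulr1 //.
by rewrite gt_eqF // (lt_le_trans ltr01).
Qed.

Local Close Scope classical_set_scope.

Lemma fl_fl (R : realType) (n : nat) (E : {set {set 'I_n}}) (ie : {set 'I_n} -> 'I_n)
  (z : 'I_n -> R) : fl E ie (fl E ie z) = z.
Proof. by apply/funext => j; rewrite /fl; case: ifP => h; rewrite h ?opprK. Qed.

Lemma fl_nz (R : realType) (n : nat) (E : {set {set 'I_n}}) (ie : {set 'I_n} -> 'I_n)
  (z : 'I_n -> R) : (exists i, z i != 0) -> exists i, fl E ie z i != 0.
Proof. by case=> i zi; exists i; rewrite /fl; case: ifP => _; rewrite ?oppr_eq0. Qed.

Lemma eig_QL (R : realType) (n k : nat) (E : {set {set 'I_n}}) (ie : {set 'I_n} -> 'I_n)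
  (lam : R) (z : 'I_n -> R) :
  (forall e, e \in E -> ie e \in e /\ cored_vertex E (ie e)) ->
  (0 < k)%N -> ~~ odd k ->
  H_eigvec k (Qx k E) lam z -> H_eigvec k (Lx k E) lam (fl E ie z).
Proof.
move=> Hie k0 ev [nz H]; split; first exact: fl_nz.
move=> j; have [h1 h2] := Lx_fl z j Hie k0 ev.
by rewrite h1 h2 H mulrCA.
Qed.

Lemma eig_LQ (R : realType) (n k : nat) (E : {set {set 'I_n}}) (ie : {set 'I_n} -> 'I_n)
  (lam : R) (z : 'I_n -> R) :
  (forall e, e \in E -> ie e \in e /\ cored_vertex E (ie e)) ->
  (0 < k)%N -> ~~ odd k ->
  H_eigvec k (Lx k E) lam z -> H_eigvec k (Qx k E) lam (fl E ie z).
Proof.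
move=> Hie k0 ev [nz H]; split; first exact: fl_nz.
move=> j; have [h1 h2] := Lx_fl (fl E ie z) j Hie k0 ev.
rewrite fl_fl in h1 h2; move: h1 h2; case: ifP => _; rewrite ?mulN1r ?mul1r => h1 h2.
  by rewrite -[Qx k E _ j]opprK -h1 H h2 mulrN opprK.
by rewrite -h1 H h2.
Qed.

Lemma largest_QL (R : realType) (n k : nat) (E : {set {set 'I_n}}) (ie : {set 'I_n} -> 'I_n)
  (lam : R) :
  (forall e, e \in E -> ie e \in e /\ cored_vertex E (ie e)) ->
  (0 < k)%N -> ~~ odd k ->
  largest_H_eigval k (Qx k E) lam <-> largest_H_eigval k (Lx k E) lam.
Proof.
move=> Hie k0 ev; split => -[[x hx] hm]; split.
- by exists (fl E ie x); exact: eig_QL.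
- by move=> mu [u hu]; apply: hm; exists (fl E ie u); exact: eig_LQ.
- by exists (fl E ie x); exact: eig_LQ.
- by move=> mu [u hu]; apply: hm; exists (fl E ie u); exact: eig_QL.
Qed.

Theorem proposition3p3 (R : realType) (n k : nat) (E : {set {set 'I_n}})
    (ie : {set 'I_n} -> 'I_n) :
  (4 <= k)%N -> ~~ odd k ->
  uniform_hypergraph k E -> cored E ->
  (forall e, e \in E -> ie e \in e /\ cored_vertex E (ie e)) ->
  (* (i) *)
  (forall (lamQ : R) (x : 'I_n -> R),
     largest_H_eigval k (Qx k E) lamQ -> nonneg_vec x ->
     H_eigvec k (Qx k E) lamQ x ->
     let y := fun j => if [exists e in E, ie e == j] then - x j else x j in
     exists lamL : R, largest_H_eigval k (Lx k E) lamL /\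
                      H_eigvec k (Lx k E) lamL y) /\
  (* (ii) *)
  (forall (lamL : R) (x : 'I_n -> R),
     largest_H_eigval k (Lx k E) lamL ->
     H_eigvec k (Lx k E) lamL x ->
     let y := fun j => `|x j| in
     nonneg_vec y /\
     exists lamQ : R, largest_H_eigval k (Qx k E) lamQ /\
                      H_eigvec k (Qx k E) lamQ y).
Proof.
move=> k4 ev hu _ Hie.
have k0 : (0 < k)%N by apply: leq_trans k4.
split.
  move=> lamQ x hl _ hx y; exists lamQ; split.
    by apply: (proj1 (largest_QL _ Hie k0 ev)).
  exact: (eig_QL Hie k0 ev hx).
move=> lamL x hl hx y; split; first by move=> i; exact: normr_ge0.
exists lamL; have hlQ : largest_H_eigval k (Qx k E) lamL.
  by apply: (proj2 (largest_QL _ Hie k0 ev)).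
split => //.
have hz := eig_LQ Hie k0 ev hx.
set z := fl E ie x in hz.
have [i0 xi0] := hx.1.
have [mu [hmu Hb]] := @Ff_bound R n k E i0 k0 ev hu.
have mul : mu <= lamL by apply: hlQ.2.
have Hb' u : Ff k E u <= lamL * Nf k u.
  by apply: le_trans (Hb u) _; apply: ler_wpM2r => //; exact: Nf_ge0.
have yz j : y j = `|z j| by rewrite /y /z /fl; case: ifP => _; rewrite ?normrN.
have ge : lamL * Nf k y <= Ff k E y.
  rewrite /Nf /Ff big_distrr /=; apply: ler_sum => i _.
  have e1 : lamL * y i ^+ k <= `|z i * Qx k E z i|.
    rewrite hz.2 mulrCA -exprS (prednK k0) normrM normrX -yz.
    by rewrite ler_wpM2r ?exprn_ge0 ?normr_ge0 // real_ler_norm // num_real.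
  apply: le_trans e1 _.
  rewrite normrM -yz ler_wpM2l ?yz ?normr_ge0 //.
  rewrite /Qx.
  apply: le_trans (ler_normD _ _) _; apply: lerD.
    by rewrite normrM normr_nat normrX -yz.
  apply: le_trans (ler_norm_sum _ _ _) _; apply: ler_sum => e _.
  rewrite normr_prod le_eqVlt; apply/orP; left; apply/eqP.
  by apply: eq_bigr => s _; rewrite yz.
have eq : Ff k E y = lamL * Nf k y by apply/le_anti; rewrite ge Hb'.
split; first by exists i0; rewrite /y normr_eq0.
exact: lagrange k0 hu Hb' eq.
Qed.
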